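(* Let $\alpha$ be irrational with $\ln2/\ln3<\alpha<1$ and write $1c_\alpha=s_0s_1s_2\cdots$. Then $\Phi_{\mathbb{R}}(1c_\alpha)$ and $\Phi_{\mathbb{R}}(0c_\alpha)$ exist, $\Phi_{\mathbb{R}}(0c_\alpha)=3\Phi_{\mathbb{R}}(1c_\alpha)+1$, and for every $L\ge0$ the number $\Phi_{\mathbb{R}}(s_Ls_{L+1}\cdots)$ exists and satisfies $$\Phi_{\mathbb{R}}(0c_\alpha)\le\Phi_{\mathbb{R}}(s_Ls_{L+1}\cdots)\le\Phi_{\mathbb{R}}(1c_\alpha).$$
   Context: For $0<\alpha<1$ the Sturmian words are $1c_\alpha=(\lceil(j+1)\alpha\rceil-\lceil j\alpha\rceil)_{j\ge0}$ and $0c_\alpha=(\lfloor(j+1)\alpha\rfloor-\lfloor j\alpha\rfloor)_{j\ge0}$. For an infinite $0$-$1$ word $w$ with $1$'s at positions $d_0<d_1<\cdots$, $\Phi_{\mathbb{R}}(w)$ is the real sum $-\sum_{i\ge0}2^{d_i}/3^{i+1}$, said to exist if the series converges. *)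

(* Defs.v *)
From Stdlib Require Import Reals ZArith.
From Coquelicot Require Import Coquelicot.
Open Scope R_scope.

(* floor and ceiling on R ; up x is the unique integer with x < up x <= x + 1 *)
Definition rfloor (x : R) : Z := (up x - 1)%Z.
Definition rceil (x : R) : Z := (- rfloor (- x))%Z.

(* infinite 0-1 words, indexed from 0 *)
Definition word := nat -> Z.

Definition sturm1 (alpha : R) : word :=
  fun j => (rceil (INR (S j) * alpha) - rceil (INR j * alpha))%Z.
Definition sturm0 (alpha : R) : word :=
  fun j => (rfloor (INR (S j) * alpha) - rfloor (INR j * alpha))%Z.

Definition suffix (L : nat) (w : word) : word := fun j => w (L + j)%nat.

Fixpoint ones (w : word) (n : nat) : nat :=
  match n with
  | O => O
  | S m => (ones w m + (if Z.eqb (w m) 1 then 1 else 0))%nat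
  end.

(* Phi_R(w) = - sum_i 2^{d_i} / 3^{i+1}, where d_0 < d_1 < ... are the
   positions of the 1's.  Reindexed over positions j: the 1 at position
   j = d_i has index i, i.e. i+1 = ones w (j+1); other positions contribute 0. *)
Definition phi_term (w : word) (j : nat) : R :=
  if Z.eqb (w j) 1 then - (2 ^ j / 3 ^ (ones w (S j))) else 0.

Definition Phi_exists (w : word) : Prop := ex_series (phi_term w).
Definition Phi (w : word) : R := Series (phi_term w).

Definition irrational (x : R) : Prop :=
  ~ exists p q : Z, q <> 0%Z /\ x = IZR p / IZR q.

(* Main.v *)
Require Import Defs.
From Stdlib Require Import Reals ZArith Lra Lia.
From Coquelicot Require Import Coquelicot.
Open Scope R_scope.

Definition uu (w : word) (j : nat) : R := 2 ^ j / 3 ^ (ones w (S j)).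

Lemma pow3_pos n : 0 < 3 ^ n.
Proof. apply pow_lt; lra. Qed.

Lemma phi_term_eq (w : word) (H01 : forall j, w j = 0%Z \/ w j = 1%Z) j :
  phi_term w j = - (1/2) * (2 ^ j / 3 ^ (ones w j) - 2 ^ j / 3 ^ (ones w (S j))).
Proof.
  unfold phi_term; simpl ones. pose proof (pow3_pos (ones w j)) as P. revert P.
  destruct (H01 j) as [E|E]; rewrite E; simpl Z.eqb; cbv iota.
  - rewrite Nat.add_0_r. intro. field. lra.
  - rewrite Nat.add_1_r. simpl pow. intro. field. lra.
Qed.

Lemma ones0 w : ones w 0 = 0%nat. Proof. reflexivity. Qed.

Ltac toR := match goal with |- ?a = ?b => change (@eq R a b) end.

Lemma partial (w : word) (H01 : forall j, w j = 0%Z \/ w j = 1%Z) N :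
  sum_n (phi_term w) N =
  - (1/2) * (1 + sum_n (uu w) N - 2 ^ (S N) / 3 ^ (ones w (S N))).
Proof.
  induction N.
  - rewrite sum_O, sum_O, (phi_term_eq w H01). unfold uu. change (ones w 0) with 0%nat.
    pose proof (pow3_pos (ones w 1)). change (2 ^ 1) with (2 * 1). change (2 ^ 0) with 1.
    change (3 ^ 0) with 1. toR. field. lra.
  - rewrite sum_Sn, sum_Sn, IHN, (phi_term_eq w H01). unfold plus; cbn -[ones pow sum_n]. unfold uu.
    pose proof (pow3_pos (ones w (S (S N)))). pose proof (pow3_pos (ones w (S N))).
    change (2 ^ S (S N)) with (2 * 2 ^ (S N)). toR. field. lra.
Qed.

Lemma key_bound (w : word) (b : R) (Hb : 2 < b)
  (Hbd : forall j, b ^ j <= 3 * 3 ^ (ones w j)) j :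
  0 <= 2 ^ j / 3 ^ (ones w j) <= 3 * (2 / b) ^ j.
Proof.
  pose proof (pow3_pos (ones w j)).
  assert (0 < b ^ j) by (apply pow_lt; lra).
  assert (0 < 2 ^ j) by (apply pow_lt; lra).
  split.
  - unfold Rdiv. apply Rmult_le_pos; [lra|]. left; apply Rinv_0_lt_compat; lra.
  - unfold Rdiv. rewrite Rpow_mult_distr, pow_inv.
    assert (/ 3 ^ ones w j <= / (b ^ j / 3)).
    { apply Rinv_le_contravar. unfold Rdiv. apply Rmult_lt_0_compat; [lra|].
      apply Rinv_0_lt_compat; lra. specialize (Hbd j). lra. }
    replace (/ (b ^ j / 3)) with (3 * / b ^ j) in H2 by (field; lra).
    replace (3 * (2 ^ j * / b ^ j)) with (2 ^ j * (3 * / b ^ j)) by ring.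
    apply Rmult_le_compat_l; lra.
Qed.

Lemma geom_ex (q : R) (c : R) : 0 <= q < 1 -> ex_series (fun n => c * q ^ n).
Proof.
  intros. apply (ex_series_scal_l c (fun n => q ^ n)).
  exists (/ (1 - q)). apply is_series_geom. rewrite Rabs_pos_eq; lra.
Qed.

Lemma main_series (w : word) (b : R) (Hb : 2 < b)
  (H01 : forall j, w j = 0%Z \/ w j = 1%Z)
  (Hbd : forall j, b ^ j <= 3 * 3 ^ (ones w j)) :
  ex_series (uu w) /\ is_series (phi_term w) (- (1/2) * (1 + Series (uu w))).
Proof.
  assert (Hq : 0 <= 2 / b < 1).
  { split. unfold Rdiv. apply Rmult_le_pos; [lra|]. left; apply Rinv_0_lt_compat; lra.
    apply (Rmult_lt_reg_r b); [lra|]. unfold Rdiv. rewrite Rmult_assoc, Rinv_l; lra. }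
  assert (Hex : ex_series (uu w)).
  { apply (ex_series_le (uu w) (fun n => (3 * (2/b)) * (2/b) ^ n)).
    - intro n. unfold norm; simpl. unfold abs; simpl.
      destruct (key_bound w b Hb Hbd (S n)) as [H1 H2].
      unfold uu. change (2 ^ S n) with (2 * 2 ^ n) in *. change ((2/b) ^ S n) with (2/b * (2/b) ^ n) in H2.
      rewrite Rabs_pos_eq.
      + unfold Rdiv in *. nra.
      + unfold Rdiv in *. pose proof (pow3_pos (ones w (S n))). 
        apply Rmult_le_pos. left; apply pow_lt; lra. left; apply Rinv_0_lt_compat; lra.
    - apply geom_ex; lra. }
  split; [exact Hex|].
  change (is_lim_seq (sum_n (phi_term w)) (- (1/2) * (1 + Series (uu w)))).
  apply (is_lim_seq_ext (fun N => - (1/2) * (1 + sum_n (uu w) N - 2 ^ (S N) / 3 ^ (ones w (S N))))).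
  { intro N. symmetry. apply partial. exact H01. }
  replace (- (1/2) * (1 + Series (uu w))) with (- (1/2) * (1 + Series (uu w) - 0)) by ring.
  apply (is_lim_seq_scal_l _ (- (1/2)) (1 + Series (uu w) - 0)).
  apply is_lim_seq_minus'.
  apply is_lim_seq_plus'. apply is_lim_seq_const. apply (Series_correct _ Hex).
  apply (is_lim_seq_incr_1 (fun N => 2 ^ N / 3 ^ ones w N)).
  apply (is_lim_seq_le_le (fun _ => 0) _ (fun N => 3 * (2/b) ^ N)).
  - intro n. apply key_bound; auto.
  - apply is_lim_seq_const.
  - replace (Finite 0) with (Rbar_mult 3 0) by (simpl; f_equal; ring).
    apply is_lim_seq_scal_l. apply is_lim_seq_geom. rewrite Rabs_pos_eq; lra.
Qed.

Lemma Phi_val (w : word) (b : R) (Hb : 2 < b)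
  (H01 : forall j, w j = 0%Z \/ w j = 1%Z)
  (Hbd : forall j, b ^ j <= 3 * 3 ^ (ones w j)) :
  Phi_exists w /\ Phi w = - (1/2) * (1 + Series (uu w)).
Proof.
  destruct (main_series w b Hb H01 Hbd) as [_ H].
  split. exists (- (1/2) * (1 + Series (uu w))); exact H.
  apply is_series_unique; exact H.
Qed.

Lemma Phi_mono (w w' : word) (b : R) (Hb : 2 < b)
  (H01 : forall j, w j = 0%Z \/ w j = 1%Z)
  (Hbd : forall j, b ^ j <= 3 * 3 ^ (ones w j))
  (H01' : forall j, w' j = 0%Z \/ w' j = 1%Z)
  (Hbd' : forall j, b ^ j <= 3 * 3 ^ (ones w' j))
  (Hle : forall j, (ones w j <= ones w' j)%nat) :
  Phi w <= Phi w'.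
Proof.
  destruct (Phi_val w b Hb H01 Hbd) as [_ E]. destruct (Phi_val w' b Hb H01' Hbd') as [_ E'].
  destruct (main_series w b Hb H01 Hbd) as [Hex _].
  rewrite E, E'.
  assert (Series (uu w') <= Series (uu w)).
  { apply Series_le; [|exact Hex]. intro n. unfold uu.
    pose proof (pow3_pos (ones w (S n))). pose proof (pow3_pos (ones w' (S n))).
    assert (0 < 2 ^ n) by (apply pow_lt; lra).
    assert (3 ^ ones w (S n) <= 3 ^ ones w' (S n)) by (apply Rle_pow; [lra| apply Hle]).
    unfold Rdiv. split.
    - apply Rmult_le_pos; [lra|]. left; apply Rinv_0_lt_compat; lra.
    - apply Rmult_le_compat_l; [lra|]. apply Rinv_le_contravar; lra. }
  lra.
Qed.

Lemma Z01 (k : Z) : -1 < IZR k < 2 -> (k = 0 \/ k = 1)%Z.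
Proof.
  intros [H1 H2]. apply lt_IZR in H2. assert (IZR (-1) < IZR k) by (simpl; lra).
  apply lt_IZR in H. lia.
Qed.

Lemma word_facts (w : word) (c : nat -> Z) (Hw : forall j, w j = (c (S j) - c j)%Z)
  (H0 : c 0%nat = 0%Z) (Hs : forall j, -1 < IZR (c (S j)) - IZR (c j) < 2) :
  (forall j, w j = 0%Z \/ w j = 1%Z) /\ (forall n, INR (ones w n) = IZR (c n)).
Proof.
  assert (H01 : forall j, w j = 0%Z \/ w j = 1%Z).
  { intro j. rewrite Hw. apply Z01. rewrite minus_IZR. apply Hs. }
  split; [exact H01|].
  assert (forall n, Z.of_nat (ones w n) = c n).
  { induction n. simpl. auto.
    simpl ones. destruct (H01 n) as [E|E]; pose proof (Hw n) as E'; rewrite E in *; simpl Z.eqb; cbv iota;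
      rewrite Nat2Z.inj_add; simpl Z.of_nat; lia. }
  intro n. rewrite INR_IZR_INZ, H. reflexivity.
Qed.

Lemma rfloor_spec x : IZR (rfloor x) <= x < IZR (rfloor x) + 1.
Proof. unfold rfloor. rewrite minus_IZR. destruct (archimed x). simpl. lra. Qed.

Lemma rceil_spec x : x <= IZR (rceil x) < x + 1.
Proof. unfold rceil. rewrite opp_IZR. destruct (rfloor_spec (- x)). lra. Qed.

Lemma Zge0 k : -1 < IZR k -> (0 <= k)%Z.
Proof. intro H. assert (IZR (-1) < IZR k) by (simpl; lra). apply lt_IZR in H0. lia. Qed.

Lemma Zle0 k : IZR k < 1 -> (k <= 0)%Z.
Proof. intro H. apply lt_IZR in H. lia. Qed.

Lemma floor_ceil_irr (alpha : R) (Hirr : irrational alpha) (j : nat) : (1 <= j)%nat ->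
  rfloor (INR j * alpha) = (rceil (INR j * alpha) - 1)%Z.
Proof.
  intro Hj. set (x := INR j * alpha).
  destruct (rfloor_spec x) as [F1 F2]. destruct (rceil_spec x) as [C1 C2].
  assert (A1 : (0 <= rceil x - rfloor x)%Z) by (apply Zge0; rewrite minus_IZR; lra).
  assert (A2 : (rceil x - rfloor x - 1 <= 0)%Z) by (apply Zle0; rewrite !minus_IZR; simpl; lra).
  assert (rceil x <> rfloor x).
  { intro E. apply Hirr. exists (rfloor x), (Z.of_nat j). split. lia.
    rewrite <- INR_IZR_INZ. assert (INR j > 0) by (apply lt_0_INR; lia).
    rewrite E in C1. assert (IZR (rfloor x) = x) by lra. rewrite H0. unfold x. field. lra. }
  lia.
Qed.

Lemma beta_bound (alpha : R) (Ha : 0 < alpha) (w : word)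
  (H : forall j, INR j * alpha - 1 <= INR (ones w j)) j :
  (Rpower 3 alpha) ^ j <= 3 * 3 ^ (ones w j).
Proof.
  rewrite <- Rpower_pow by (unfold Rpower; apply exp_pos).
  rewrite <- (Rpower_pow (ones w j) 3) by lra.
  rewrite Rpower_mult. rewrite <- (Rpower_1 3) at 2 by lra. rewrite <- Rpower_plus.
  apply Rle_Rpower. lra. specialize (H j). lra.
Qed.

Lemma beta_gt2 (alpha : R) (Hlo : ln 2 / ln 3 < alpha) : 2 < Rpower 3 alpha.
Proof.
  unfold Rpower. assert (0 < ln 3) by (rewrite <- ln_1; apply ln_increasing; lra).
  assert (ln 2 < alpha * ln 3).
  { apply (Rmult_lt_compat_r (ln 3)) in Hlo; [|lra]. unfold Rdiv in Hlo.
    rewrite Rmult_assoc, Rinv_l in Hlo; lra. }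
  rewrite <- (exp_ln 2) at 1 by lra. apply exp_increasing. exact H0.
Qed.

Theorem lemma25 (alpha : R) (Hirr : irrational alpha)
  (Hlo : ln 2 / ln 3 < alpha) (Hhi : alpha < 1) :
  Phi_exists (sturm1 alpha) /\ Phi_exists (sturm0 alpha) /\
  Phi (sturm0 alpha) = 3 * Phi (sturm1 alpha) + 1 /\
  (forall L : nat,
     Phi_exists (suffix L (sturm1 alpha)) /\
     Phi (sturm0 alpha) <= Phi (suffix L (sturm1 alpha)) <= Phi (sturm1 alpha)).
Proof.
  set (b := Rpower 3 alpha).
  assert (Hb : 2 < b) by (apply beta_gt2; exact Hlo).
  assert (Ha : 0 < alpha).
  { assert (0 < ln 2) by (rewrite <- ln_1; apply ln_increasing; lra).
    assert (0 < ln 3) by (rewrite <- ln_1; apply ln_increasing; lra).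
    assert (0 < ln 2 / ln 3) by (unfold Rdiv; apply Rmult_lt_0_compat; [lra|apply Rinv_0_lt_compat; lra]).
    lra. }
  set (c1 := fun n : nat => rceil (INR n * alpha)).
  set (c0 := fun n : nat => rfloor (INR n * alpha)).
  assert (E1 : forall j, INR (S j) * alpha = INR j * alpha + alpha) by (intro; rewrite S_INR; ring).
  destruct (word_facts (sturm1 alpha) c1) as [H011 O1].
  { intro j. reflexivity. }
  { unfold c1. simpl INR. rewrite Rmult_0_l. destruct (rceil_spec 0).
    apply Z.le_antisymm. apply Zle0; lra. apply Zge0; lra. }
  { intro j. unfold c1. rewrite E1. destruct (rceil_spec (INR j * alpha)).
    destruct (rceil_spec (INR j * alpha + alpha)). lra. }
  assert (B1 : forall j, b ^ j <= 3 * 3 ^ ones (sturm1 alpha) j).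
  { apply beta_bound; auto. intro j. rewrite O1. unfold c1. destruct (rceil_spec (INR j * alpha)). lra. }
  destruct (word_facts (sturm0 alpha) c0) as [H010 O0].
  { intro j. reflexivity. }
  { unfold c0. simpl INR. rewrite Rmult_0_l. destruct (rfloor_spec 0).
    apply Z.le_antisymm. apply Zle0; lra. apply Zge0; lra. }
  { intro j. unfold c0. rewrite E1. destruct (rfloor_spec (INR j * alpha)).
    destruct (rfloor_spec (INR j * alpha + alpha)). lra. }
  assert (B0 : forall j, b ^ j <= 3 * 3 ^ ones (sturm0 alpha) j).
  { apply beta_bound; auto. intro j. rewrite O0. unfold c0. destruct (rfloor_spec (INR j * alpha)). lra. }
  destruct (Phi_val _ b Hb H011 B1) as [X1 P1].
  destruct (Phi_val _ b Hb H010 B0) as [X0 P0].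
  split; [exact X1|]. split; [exact X0|]. split.
  { rewrite P0, P1.
    assert (Series (uu (sturm0 alpha)) = 3 * Series (uu (sturm1 alpha))).
    { rewrite <- Series_scal_l. apply Series_ext. intro n. unfold uu.
      assert (ones (sturm1 alpha) (S n) = S (ones (sturm0 alpha) (S n))).
      { apply INR_eq. rewrite S_INR, O1, O0. unfold c0, c1.
        rewrite (floor_ceil_irr alpha Hirr (S n)) by lia. rewrite minus_IZR. simpl. ring. }
      rewrite H. rewrite <- tech_pow_Rmult. pose proof (pow3_pos (ones (sturm0 alpha) (S n))). toR. field. lra. }
    rewrite H. lra. }
  intro L.
  set (cL := fun n => (c1 (L + n)%nat - c1 L)%Z).
  destruct (word_facts (suffix L (sturm1 alpha)) cL) as [H01L OL].
  { intro j. unfold suffix, cL, sturm1, c1. rewrite Nat.add_succ_r. lia. }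
  { unfold cL. rewrite Nat.add_0_r. lia. }
  { intro j. unfold cL, c1. rewrite !minus_IZR, Nat.add_succ_r, E1.
    destruct (rceil_spec (INR (L + j) * alpha)).
    destruct (rceil_spec (INR (L + j) * alpha + alpha)). lra. }
  assert (RL : forall n, INR n * alpha - 1 < IZR (cL n) < INR n * alpha + 1).
  { intro n. unfold cL, c1. rewrite minus_IZR, plus_INR.
    destruct (rceil_spec (INR L * alpha)). destruct (rceil_spec ((INR L + INR n) * alpha)). nra. }
  assert (BL : forall j, b ^ j <= 3 * 3 ^ ones (suffix L (sturm1 alpha)) j).
  { apply beta_bound; auto. intro j. rewrite OL. destruct (RL j). lra. }
  destruct (Phi_val _ b Hb H01L BL) as [XL PL].
  split; [exact XL|]. split.
  - apply (Phi_mono _ _ b Hb H010 B0 H01L BL). intro j. apply INR_le. rewrite O0, OL.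
    apply IZR_le. assert (0 <= cL j - c0 j)%Z; [|lia].
    apply Zge0. rewrite minus_IZR. destruct (RL j). unfold c0. destruct (rfloor_spec (INR j * alpha)). lra.
  - apply (Phi_mono _ _ b Hb H01L BL H011 B1). intro j. apply INR_le. rewrite O1, OL.
    apply IZR_le. assert (cL j - c1 j <= 0)%Z; [|lia].
    apply Zle0. rewrite minus_IZR. destruct (RL j). unfold c1. destruct (rceil_spec (INR j * alpha)). lra.
Qed.
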